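(* Let $\mathcal{C}$ be a robust hereditary graph class for which $\beta_{\mathcal{C}}$ is finite. For every integer $d\ge 1$, $$\beta_{\mathcal{C}}(d)=\begin{cases}2^{d-1}+1 & \text{if } \beta_{\mathcal{C}}=1,\\ (\beta_{\mathcal{C}}-1)\,2^{d}+1 & \text{if } \beta_{\mathcal{C}}\ge 2.\end{cases}$$ In particular, the maximum size of a minimal blocking set in a graph of treedepth at most $d$ is $1$ for $d=1$ and $2^{d-2}+1$ for $d\ge2$.
   Context: All graphs are finite, simple, undirected. $\mathrm{OPT}(G)$ is the minimum vertex cover size. $Y\subseteq V(G)$ is a blocking set of $G$ if no vertex cover of $G$ of size $\mathrm{OPT}(G)$ contains $Y$; minimal if no proper subset is a blocking set. $\beta(G)$ is the maximum size of a minimal blocking set of $G$; for a class $\mathcal{C}$, $\beta_{\mathcal{C}}=\sup_{G\in\mathcal{C}}\beta(G)$. Elimination distance of $G$ to $\mathcal{C}$: $\mathrm{ed}_{\mathcal{C}}(G)=0$ if $G\in\mathcal{C}$; otherwise, if $G$ is connected, $\mathrm{ed}_{\mathcal{C}}(G)=1+\min_{v\in V(G)}\mathrm{ed}_{\mathcal{C}}(G-v)$; otherwise it is the maximum of $\mathrm{ed}_{\mathcal{C}}$ over the connected components of $G$. $\beta_{\mathcal{C}}(d)=\max\{\beta(G): \mathrm{ed}_{\mathcal{C}}(G)\le d\}$. Treedepth is the elimination distance to the class consisting of the empty graph. A class is hereditary if closed under taking induced subgraphs, and robust if a graph is in it iff all its connected components are. *)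

(* Defs.v *)
From mathcomp Require Import all_boot.
Set Implicit Arguments. Unset Strict Implicit. Unset Printing Implicit Defensive.

Record graph := Graph {
  vert : finType;
  adj : rel vert;
  adj_sym : symmetric adj;
  adj_irr : irreflexive adj }.

Definition induced_adj (G : graph) (S : {set vert G}) :
  rel {x : vert G | x \in S} := fun x y => adj (val x) (val y).

Lemma induced_sym (G : graph) (S : {set vert G}) : symmetric (@induced_adj G S).
Proof. by move=> x y; rewrite /induced_adj adj_sym. Qed.

Lemma induced_irr (G : graph) (S : {set vert G}) : irreflexive (@induced_adj G S).
Proof. by move=> x; rewrite /induced_adj adj_irr. Qed.

Definition induced (G : graph) (S : {set vert G}) : graph :=
  @Graph {x : vert G | x \in S} (@induced_adj G S) (@induced_sym G S) (@induced_irr G S).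

Definition delv (G : graph) (v : vert G) : graph := induced [set~ v].

Definition connected (G : graph) : bool :=
  (0 < #|vert G|) && [forall x, forall y, connect (@adj G) x y].

Definition component (G : graph) (x : vert G) : graph :=
  induced [set y | connect (@adj G) x y].

Definition iso (G H : graph) : Prop :=
  exists f : vert G -> vert H, bijective f /\
    forall x y, adj (f x) (f y) = adj x y.

Definition iso_closed (C : graph -> Prop) : Prop :=
  forall G H, iso G H -> C G -> C H.

Definition hereditary (C : graph -> Prop) : Prop :=
  forall (G : graph) (S : {set vert G}), C G -> C (induced S).

Definition robust (C : graph -> Prop) : Prop :=
  forall G : graph, C G <-> (forall x : vert G, C (component x)).

Definition vertex_cover (G : graph) (X : {set vert G}) : bool :=
  [forall x, forall y, adj x y ==> (x \in X) || (y \in X)].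

(* minimum vertex cover size (the full vertex set is always a cover) *)
Definition OPT (G : graph) : nat :=
  \big[minn/#|vert G|]_(X : {set vert G} | vertex_cover X) #|X|.

Definition blocking (G : graph) (Y : {set vert G}) : bool :=
  [forall X : {set vert G}, (vertex_cover X && (#|X| == OPT G)) ==> ~~ (Y \subset X)].

Definition minimal_blocking (G : graph) (Y : {set vert G}) : bool :=
  minset (@blocking G) Y.

(* beta(G): maximum size of a minimal blocking set (0 if there is none) *)
Definition beta (G : graph) : nat :=
  \max_(Y : {set vert G} | minimal_blocking Y) #|Y|.

Definition is_max_beta (P : graph -> Prop) (m : nat) : Prop :=
  (exists G, P G /\ beta G = m) /\ (forall G, P G -> beta G <= m).

(* Elimination distance: ed_le C d G  <->  ed_C(G) <= d. *)
Inductive ed_le (C : graph -> Prop) : nat -> graph -> Prop :=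
| ed_in d G : C G -> ed_le C d G
| ed_del d G (v : vert G) : connected G -> ed_le C d (delv v) -> ed_le C d.+1 G
| ed_comp d G : ~~ connected G -> (forall x : vert G, ed_le C d (component x)) ->
    ed_le C d G.

(* the class consisting of the empty graph; treedepth = ed to this class *)
Definition empty_class (G : graph) : Prop := #|vert G| = 0.

(* Main.v *)
Require Import Defs.
From mathcomp Require Import all_boot zify.
Set Implicit Arguments. Unset Strict Implicit. Unset Printing Implicit Defensive.

Section Sets.
Variable G : graph.
Local Notation V := (vert G).
Local Notation adj := (@adj G).
Implicit Types S T I J Y Z : {set V}.

Definition indep I : bool := [forall x in I, forall y in I, ~~ adj x y].
Definition alpha S : nat := \max_(I : {set V} | (I \subset S) && indep I) #|I|.
Definition mis S I : bool := [&& I \subset S, indep I & #|I| == alpha S].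
Definition tr S Y : bool := (Y \subset S) && [forall I, mis S I ==> ~~ [disjoint Y & I]].
Definition bs S : nat := \max_(Y | minset (tr S) Y) #|Y|.

Lemma indepP I : reflect (forall x y, x \in I -> y \in I -> ~~ adj x y) (indep I).
Proof.
apply: (iffP forall_inP) => [h x y xI yI| h x xI]; first by move/forall_inP: (h x xI); apply.
by apply/forall_inP => y yI; apply: h.
Qed.

Lemma indepS I J : I \subset J -> indep J -> indep I.
Proof.
move=> sIJ /indepP h; apply/indepP => x y xI yI; apply: h; exact: (subsetP sIJ).
Qed.

Lemma indep0 : indep set0.
Proof. by apply/indepP => x y; rewrite inE. Qed.

Lemma alpha_ge S I : I \subset S -> indep I -> #|I| <= alpha S.
Proof. by move=> sIS iI; apply: (leq_bigmax_cond I); rewrite sIS iI. Qed.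

Lemma alpha_ex S : exists I, mis S I.
Proof.
have: #|[pred I : {set V} | (I \subset S) && indep I]| > 0.
  by apply/card_gt0P; exists set0; rewrite inE sub0set indep0.
case/(eq_bigmax_cond (fun I : {set V} => #|I|)) => I; rewrite inE => /andP[sIS iI] e.
exists I; rewrite /mis sIS iI /=; apply/eqP; rewrite /alpha.
symmetry; rewrite -e; apply: eq_bigl => J; by rewrite inE.
Qed.

Lemma misP S I : reflect [/\ I \subset S, indep I & #|I| = alpha S] (mis S I).
Proof. by apply: (iffP and3P) => -[a b c]; split=> //; apply/eqP. Qed.

Lemma alpha_le S m : (forall I, I \subset S -> indep I -> #|I| <= m) -> alpha S <= m.
Proof. by move=> h; apply/bigmax_leqP => I /andP[]; apply: h. Qed.

Lemma alphaS S T : S \subset T -> alpha S <= alpha T.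
Proof. by move=> sST; apply: alpha_le => I sIS iI; apply: alpha_ge => //; apply: subset_trans sST. Qed.

Lemma alpha_sub S : alpha S <= #|S|.
Proof. by apply: alpha_le => I sIS _; apply: subset_leq_card. Qed.

Lemma mis_ge S I : I \subset S -> indep I -> alpha S <= #|I| -> mis S I.
Proof.
move=> sIS iI le; apply/misP; split=> //; apply/eqP; rewrite eqn_leq le andbT.
exact: alpha_ge.
Qed.

Lemma trP S Y : reflect (Y \subset S /\ forall I, mis S I -> exists2 y, y \in Y & y \in I) (tr S Y).
Proof.
apply: (iffP andP) => -[sYS h]; split=> //.
  move=> I mI; move/forallP: h => /(_ I); rewrite mI /= => /pred0Pn [y /andP[yY yI]].
  by exists y.
apply/forallP => I; apply/implyP => /h [y yY yI]; apply/pred0Pn; exists y; exact/andP.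
Qed.

Lemma trS S Y Y' : Y \subset Y' -> Y' \subset S -> tr S Y -> tr S Y'.
Proof.
move=> sYY sYS /trP [_ h]; apply/trP; split=> // I /h [y yY yI].
by exists y => //; apply: (subsetP sYY).
Qed.

Lemma minsetP' S Y : reflect (tr S Y /\ forall y, y \in Y -> exists2 I, mis S I & Y :&: I = [set y])
  (minset (tr S) Y).
Proof.
apply: (iffP minsetP) => -[tY h]; split=> //.
  move=> y yY; case/trP: tY => sYS htY.
  have: ~~ tr S (Y :\ y).
    apply/negP => /h; rewrite subD1set => /(_ isT) /setP /(_ y).
    by rewrite !inE eqxx yY.
  case/nandP; first by rewrite (subset_trans (subD1set _ _) sYS).
  rewrite negb_forall => /existsP [I]; rewrite negb_imply negbK => /andP [mI dI].
  exists I => //; apply/setP => z; rewrite !inE; apply/andP/eqP => [[zY zI]|->]; last first.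
    split=> //; case: (htY I mI) => w wY wI; case: (eqVneq w y) => [<- //|nzy].
    by move/pred0P: dI => /(_ w); rewrite !inE nzy wY wI.
  apply/eqP; apply/negPn/negP => nzy.
  by move/pred0P: dI => /(_ z); rewrite !inE nzy zY zI.
move=> B tB sBY; apply/eqP; rewrite eqEsubset sBY /=; apply/subsetP => y yY.
case: (h y yY) => I mI eI; case/trP: tB => _ /(_ I mI) [z zB zI].
have: z \in Y :&: I by rewrite inE zI (subsetP sBY).
by rewrite eI inE => /eqP <-.
Qed.

Lemma bs_ge S Y : minset (tr S) Y -> #|Y| <= bs S.
Proof. by move=> mY; apply: (leq_bigmax_cond Y). Qed.

Lemma bs_le S m : (forall Y, minset (tr S) Y -> #|Y| <= m) -> bs S <= m.
Proof. by move=> h; apply/bigmax_leqP. Qed.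

Lemma bs_lb S Z Y0 : tr S Z -> Y0 \subset Z ->
  (forall y, y \in Y0 -> exists2 I, mis S I & Z :&: I = [set y]) ->
  #|Y0| <= bs S /\ ((exists2 I, mis S I & [disjoint Y0 & I]) -> #|Y0| < bs S).
Proof.
move=> tZ sY0Z hY0.
case: (minset_exists tZ) => T mT sTZ.
have sY0T : Y0 \subset T.
  apply/subsetP => y yY0; case: (hY0 y yY0) => I mI eI.
  case/minsetP': mT => /trP [_ /(_ I mI)] [z zT zI] _.
  have: z \in Z :&: I by rewrite inE zI (subsetP sTZ).
  by rewrite eI inE => /eqP <-.
have le := bs_ge mT.
split; first by apply: leq_trans le; apply: subset_leq_card.
case=> I mI dI; apply: leq_trans le; apply: proper_card.
rewrite properEneq sY0T andbT; apply/eqP => eY.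
case/minsetP': mT => /trP [_ /(_ I mI)] [z zT zI] _.
by move/pred0P: dI => /(_ z); rewrite /= eY zT zI.
Qed.


Lemma mis_sub_S S T I : T \subset S -> mis S I -> I \subset T -> mis T I /\ alpha T = alpha S.
Proof.
move=> sTS /misP [sIS iI cI] sIT.
have e : alpha T = alpha S.
  by apply/eqP; rewrite eqn_leq alphaS //= -cI alpha_ge.
by split=> //; apply/misP; split; rewrite ?e.
Qed.

Lemma mis_sup_S S T I : T \subset S -> alpha T = alpha S -> mis T I -> mis S I.
Proof.
move=> sTS e /misP [sIT iI cI]; apply/misP; split=> //; first exact: subset_trans sTS.
by rewrite cI.
Qed.

Lemma mis_sub S I : mis S I -> I \subset S.
Proof. by case/misP. Qed.
Lemma mis_indep S I : mis S I -> indep I.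
Proof. by case/misP. Qed.
Lemma mis_card S I : mis S I -> #|I| = alpha S.
Proof. by case/misP. Qed.

Lemma tr_sub S Y : tr S Y -> Y \subset S.
Proof. by case/trP. Qed.
Lemma tr_hit S Y I : tr S Y -> mis S I -> exists2 y, y \in Y & y \in I.
Proof. by case/trP => _; apply. Qed.

Lemma adjC x y : adj x y = adj y x.
Proof. exact: adj_sym. Qed.

Section Key.
Variables (S : {set V}) (v : V) (b : nat).
Hypothesis vS : v \in S.
Hypothesis hb : forall T, T \subset S :\ v -> bs T <= b.
Let H := S :\ v.
Let N := [set x | adj v x].
Let W := H :\: N.

Lemma sHS : H \subset S. Proof. exact: subD1set. Qed.
Lemma sWH : W \subset H. Proof. exact: subsetDl. Qed.
Lemma vNH : v \notin H. Proof. by rewrite !inE eqxx. Qed.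

Lemma misv_W I : mis S I -> v \in I -> (I :\ v \subset W) /\ indep (I :\ v) /\ #|I :\ v| = (alpha S).-1.
Proof.
move=> /misP [sIS iI cI] vI; split; last split.
- apply/subsetP => x; rewrite !inE => /andP [nxv xI].
  rewrite nxv (subsetP sIS _ xI) andbT /=; move/indepP: iI => /(_ v x vI xI) -> //.
- by apply: indepS iI; apply: subD1set.
- by rewrite -cI (cardsD1 v I) vI.
Qed.

Lemma W_ext J : J \subset W -> indep J -> (v |: J \subset S) /\ indep (v |: J) /\ #|v |: J| = #|J|.+1.
Proof.
move=> sJW iJ.
have vJ : v \notin J by apply/negP => /(subsetP (subset_trans sJW sWH)); rewrite (negbTE vNH).
split; last split.
- by rewrite subUset sub1set vS (subset_trans sJW (subset_trans sWH sHS)).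
- apply/indepP => x y; rewrite !inE => /predU1P [-> | xJ] /predU1P [-> | yJ].
  + by rewrite adj_irr.
  + move/(subsetP sJW): yJ; rewrite !inE => /andP [/negbTE -> _] //.
  + move/(subsetP sJW): xJ; rewrite !inE adjC => /andP [/negbTE -> _] //.
  + by move/indepP: iJ; apply.
- by rewrite cardsU1 vJ.
Qed.

Lemma alpha_W_S : (alpha W).+1 <= alpha S.
Proof.
case: (alpha_ex W) => J /misP [sJW iJ cJ]; case: (W_ext sJW iJ) => s [i c].
by rewrite -cJ -c alpha_ge.
Qed.

Lemma alpha_S_H : alpha S <= (alpha H).+1.
Proof.
case: (alpha_ex S) => I /misP [sIS iI cI]; rewrite -cI (cardsD1 v I).
have : #|I :\ v| <= alpha H.
  apply: alpha_ge; last by apply: indepS iI; apply: subD1set.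
  by apply/subsetP => x; rewrite !inE => /andP [-> /(subsetP sIS)].
by case: (v \in I) => /=; lia.
Qed.

Lemma misH_S I : alpha H = alpha S -> mis H I -> mis S I.
Proof. by move=> e; apply: mis_sup_S; rewrite // sHS. Qed.

Lemma misS_H I : alpha H = alpha S -> mis S I -> v \notin I -> mis H I.
Proof.
move=> e /misP [sIS iI cI] vI; apply/misP; split=> //; last by rewrite e.
by apply/subsetP => x xI; rewrite !inE (subsetP sIS _ xI) andbT; apply: contraNneq vI => <-.
Qed.

Lemma ar1 x y z : x <= y -> y.+1 <= z -> x <= z.-1. Proof. lia. Qed.
Lemma ar4 x z : x < z -> x <= z.-1. Proof. lia. Qed.
Lemma ar2 z : 0 < z -> z <= z.-1.+1. Proof. lia. Qed.
Lemma ar3 a b0 y : y = a + b0 -> a <= b -> b0 <= b -> a < b \/ b0 < b -> y <= (2 * b).-1.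
Proof. move=> -> ? ?; case; lia. Qed.

Lemma inter1 (Y I : {set V}) y z : Y :&: I = [set y] -> z \in Y -> z \in I -> z = y.
Proof. move=> e zY zI; have : z \in Y :&: I by rewrite inE zY zI. by rewrite e inE => /eqP. Qed.

Lemma inter1_sub (Y Z I : {set V}) y : Y :&: I = [set y] -> Z \subset Y -> y \in Z -> Z :&: I = [set y].
Proof.
move=> e sZY yZ; apply/setP => z; rewrite !inE; apply/andP/eqP => [[zZ zI]|->].
  exact: inter1 e (subsetP sZY _ zZ) zI.
split=> //; have : y \in Y :&: I by rewrite e set11.
by rewrite inE => /andP [].
Qed.

Lemma inter1_mem (Y I : {set V}) y : Y :&: I = [set y] -> y \in Y /\ y \in I.
Proof. move=> e; have : y \in Y :&: I by rewrite e set11. by rewrite inE => /andP. Qed.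

Lemma keyB Y : alpha H = alpha S -> v \notin Y -> minset (tr S) Y -> #|Y| <= (2 * b).-1.
Proof.
move=> eH vY mY; case/minsetP': (mY) => tY priv.
have sYS := tr_sub tY.
have yv : forall y, y \in Y -> y != v by move=> y yY; apply: contraNneq vY => <-.
have sYH : Y \subset H.
  by apply/subsetP => y yY; rewrite !inE yv ?(subsetP sYS).
pose YB := [set y in Y | [exists I, [&& mis S I, v \in I & Y :&: I == [set y]]]].
pose YA := Y :\: YB.
have sYBY : YB \subset Y by apply/subsetP => y; rewrite inE => /andP [].
have sYAY : YA \subset Y by apply: subsetDl.
have cY : #|Y| = #|YA| + #|YB|.
  by rewrite -(cardsID YB Y) (setIidPr sYBY) addnC.
have YAB : forall z, z \in Y -> z \notin YA -> z \in YB.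
  by move=> z zY; rewrite inE zY andbT negbK.
have privB : forall y, y \in YB -> exists2 I, mis S I & v \in I /\ Y :&: I = [set y].
  move=> y; rewrite inE => /andP [_ /existsP [I /and3P [mI vI /eqP e]]].
  by exists I.
have privA : forall y, y \in YA -> exists2 I, mis H I &
    [/\ Y :&: I = [set y], I \subset H :\: YB & mis S I].
  move=> y; rewrite inE => /andP [nyB yY].
  case: (priv y yY) => I mI eI.
  have vI : v \notin I.
    apply/negP => vI; move: nyB; rewrite inE yY /=; apply/negP/negPn/existsP.
    by exists I; rewrite mI vI eI eqxx.
  exists I; first exact: misS_H.
  split=> //; apply/subsetP => x xI; rewrite inE (subsetP (mis_sub (misS_H eH mI vI)) _ xI) andbT.
  apply/negP => xB; have xy := inter1 eI (subsetP sYBY _ xB) xI.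
  by move: nyB; rewrite -xy xB.
have sYBW : YB \subset W.
  apply/subsetP => w wB; case: (privB w wB) => I mI [vI eI].
  have [s _] := misv_W mI vI; apply: (subsetP s).
  have [wY wI] := inter1_mem eI.
  by rewrite !inE wI yv.
have sYAH : YA \subset H :\: YB.
  apply/subsetP => z zA; rewrite inE (subsetP sYH _ (subsetP sYAY _ zA)) andbT.
  by move: zA; rewrite inE => /andP [].
have bA : #|YA| <= b.
  case: (set_0Vmem YA) => [->|[y yA]]; first by rewrite cards0.
  pose T := H :\: YB.
  have sTH : T \subset H := subsetDl _ _.
  have sTS : T \subset S := subset_trans sTH sHS.
  case: (privA y yA) => P mP [eP sPT mPS].
  have [_ eT] := mis_sub_S sTS mPS sPT.
  have tT : tr T YA.
    apply/trP; split=> // I mI; have mIS := mis_sup_S sTS eT mI.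
    case: (tr_hit tY mIS) => z zY zI; exists z => //.
    have : z \in T by exact: (subsetP (mis_sub mI)).
    move=> zT; rewrite inE zY andbT; move: zT; rewrite inE => /andP [] //.
  have pr : forall z, z \in YA -> exists2 I, mis T I & YA :&: I = [set z].
    move=> z zA; case: (privA z zA) => I mI [eI sIT mIS]; exists I.
      by case: (mis_sub_S sTS mIS sIT).
    exact: inter1_sub eI sYAY zA.
  have [le _] := bs_lb tT (subxx YA) pr.
  by apply: leq_trans le _; apply: hb.
have aS1 : 0 < alpha S by apply: leq_trans alpha_W_S.
have bB : #|YB| <= b.
  case: (set_0Vmem YB) => [->|[w wB]]; first by rewrite cards0.
  pose T := W :\: YA.
  have sTW : T \subset W := subsetDl _ _.
  have sTH : T \subset H := subset_trans sTW sWH.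
  have privB' : forall w, w \in YB -> exists2 J : {set V}, (J \subset T) /\ indep J /\ #|J| = (alpha S).-1 &
      exists2 I, mis S I & [/\ J = I :\ v, v \in I & Y :&: I = [set w]].
    move=> w' wB'; case: (privB w' wB') => I mI [vI eI].
    case: (misv_W mI vI) => s [i c]; exists (I :\ v); last by exists I.
    split=> //; apply/subsetP => x xJ; rewrite inE (subsetP s _ xJ) andbT.
    apply/negP => xA; move: xJ; rewrite inE => /andP [_ xI].
    have xw := inter1 eI (subsetP sYAY _ xA) xI.
    by move: xA; rewrite inE xw wB'.
  have eT : alpha T = (alpha S).-1.
    case: (privB' w wB) => J [sJ [iJ cJ]] _.
    apply/eqP; rewrite eqn_leq -{2}cJ (alpha_ge sJ iJ) andbT.
    exact: ar1 (alphaS sTW) alpha_W_S.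
  have tT : tr T YB.
    apply/trP; split.
      apply/subsetP => z zB; rewrite inE (subsetP sYBW _ zB) andbT.
      by rewrite inE zB.
    move=> J /misP [sJT iJ cJ].
    case: (W_ext (subset_trans sJT sTW) iJ) => s [i c].
    have mI : mis S (v |: J) by apply: mis_ge => //; rewrite c cJ eT; exact: ar2.
    case: (tr_hit tY mI) => z zY; case/setU1P => [ezv|zJ].
      by rewrite -ezv zY in vY.
    exists z => //; apply: YAB => //.
    have : z \in T by exact: (subsetP sJT).
    by rewrite inE => /andP [].
  have pr : forall z, z \in YB -> exists2 J, mis T J & YB :&: J = [set z].
    move=> z zB; case: (privB' z zB) => J [sJ [iJ cJ]] [I mI [eJ vI eI]].
    exists J; first by apply: mis_ge => //; rewrite cJ eT.
    apply/setP => x; rewrite in_setI eJ in_setD1 in_set1.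
    apply/andP/eqP => [[xB /andP [xv xI]]|->].
      exact: inter1 eI (subsetP sYBY _ xB) xI.
    have [zY zI] := inter1_mem eI.
    by rewrite zB zI yv.
  have [le _] := bs_lb tT (subxx YB) pr.
  by apply: leq_trans le _; apply: hb.
apply: (ar3 cY bA bB).
case: (boolP [exists L, mis H L && [disjoint YA & L]]).
- case/existsP => L /andP [mL dL]; left.
  pose Q := Y :&: L.
  pose T := H :\: (YB :\: Q).
  have sTH : T \subset H := subsetDl _ _.
  have sTS : T \subset S := subset_trans sTH sHS.
  have sLT : L \subset T.
    apply/subsetP => x xL; rewrite in_setD (subsetP (mis_sub mL) _ xL) andbT in_setD negb_and negbK.
    case: (boolP (x \in YB)) => xB; rewrite ?orbT //= orbF.
    by rewrite in_setI xL (subsetP sYBY _ xB).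
  have mLS := misH_S eH mL.
  have [mLT eT] := mis_sub_S sTS mLS sLT.
  pose Z := YA :|: Q.
  have sZY : Z \subset Y by rewrite subUset sYAY subsetIl.
  have tT : tr T Z.
    apply/trP; split.
      rewrite subUset; apply/andP; split.
        apply: (subset_trans sYAH); apply: setDS; exact: subsetDl.
      exact: subset_trans (subsetIr _ _) sLT.
    move=> I mI; have mIS := mis_sup_S sTS eT mI.
    case: (tr_hit tY mIS) => z zY zI; exists z => //.
    rewrite inE; case: (boolP (z \in YA)) => //= zA.
    have zB := YAB z zY zA.
    have : z \in T by exact: (subsetP (mis_sub mI)).
    by rewrite in_setD in_setD zB andbT negbK => /andP [].
  have pr : forall z, z \in YA -> exists2 I, mis T I & Z :&: I = [set z].
    move=> z zA; case: (privA z zA) => I mI [eI sIHB mIS].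
    have sIT : I \subset T.
      apply: (subset_trans sIHB); apply: setDS; exact: subsetDl.
    exists I; first by case: (mis_sub_S sTS mIS sIT).
    by apply: inter1_sub eI sZY _; rewrite inE zA.
  have [_ lt] := bs_lb tT (subsetUl _ _) pr.
  apply: leq_trans (lt _) _; first by exists L.
  by apply: hb.
- rewrite negb_exists => /forallP hL; right.
  case: (alpha_ex H) => L0 mL0.
  move: (hL L0); rewrite mL0 /= => /pred0Pn [y /andP [yA yL0]].
  case: (privA y yA) => P mP [eP sPHB mPS].
  have [yY yP] := inter1_mem eP.
  pose T := (W :|: P) :\: YA.
  have sTH : T \subset H.
    by apply: subset_trans (subsetDl _ _) _; rewrite subUset sWH (mis_sub mP).
  have sTW : forall J, J \subset T -> J :&: N = set0 -> J \subset W.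
    move=> J sJT eJ; apply/subsetP => x xJ; rewrite in_setD (subsetP sTH _ (subsetP sJT _ xJ)) andbT.
    apply/negP => xN; have : x \in J :&: N by rewrite in_setI xJ xN.
    by rewrite eJ inE.
  pose K := P :\ y.
  have sKT : K \subset T.
    apply/subsetP => x; rewrite !inE => /andP [xy xP]; rewrite xP orbT andbT.
    apply/negP => /andP [_ xY]; by move: xy; rewrite (inter1 eP xY xP) eqxx.
  have cK : #|K| = (alpha S).-1 by rewrite -eH -(mis_card mP) (cardsD1 y P) yP.
  have iK : indep K by apply: indepS (mis_indep mP); apply: subD1set.
  have ltT : alpha T < alpha S.
    rewrite ltnNge; apply/negP => le.
    case: (alpha_ex T) => L' mL'.
    have mL'H : mis H L'.
      apply: mis_ge; [exact: subset_trans (mis_sub mL') sTH | exact: mis_indep mL' |].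
      by rewrite (mis_card mL') eH.
    move: (hL L'); rewrite mL'H /= => /pred0Pn [z /andP [zA zL']].
    have zA' : z \in YA := zA.
    have := subsetP (mis_sub mL') _ zL'; by rewrite in_setD zA'.
  have eT : alpha T = (alpha S).-1.
    by apply/eqP; rewrite eqn_leq -{2}cK (alpha_ge sKT iK) andbT; exact: ar4.
  have mKT : mis T K by apply: mis_ge => //; rewrite cK eT.
  pose Z := YB :|: (T :&: N).
  have tT : tr T Z.
    apply/trP; split.
      rewrite subUset subsetIl andbT; apply/subsetP => z zB.
      by rewrite in_setD in_setU (subsetP sYBW _ zB) /= andbT in_setD zB.
    move=> J /misP [sJT iJ cJ].
    case: (set_0Vmem (J :&: N)) => [eJ|[x]]; last first.
      rewrite inE => /andP [xJ xN]; exists x => //.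
      by rewrite in_setU in_setI (subsetP sJT _ xJ) xN orbT.
    have sJW := sTW J sJT eJ.
    case: (W_ext sJW iJ) => s [i c].
    have mI : mis S (v |: J) by apply: mis_ge => //; rewrite c cJ eT; exact: ar2.
    case: (tr_hit tY mI) => z zY; case/setU1P => [ezv|zJ].
      by rewrite -ezv zY in vY.
    exists z => //; rewrite inE; apply/orP; left; apply: YAB => //.
    have : z \in T by exact: (subsetP sJT).
    by rewrite inE => /andP [].
  have pr : forall w, w \in YB -> exists2 J, mis T J & Z :&: J = [set w].
    move=> w wB; case: (privB w wB) => I mI [vI eI].
    case: (misv_W mI vI) => s [i c].
    have [wY wI] := inter1_mem eI.
    have sJT : I :\ v \subset T.
      apply/subsetP => x xJ; rewrite in_setD in_setU (subsetP s _ xJ) /= andbT.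
      apply/negP => xA; move: xJ; rewrite in_setD1 => /andP [_ xI].
      have xw := inter1 eI (subsetP sYAY _ xA) xI.
      by move: xA; rewrite in_setD xw wB.
    exists (I :\ v); first by apply: mis_ge => //; rewrite c eT.
    apply/setP => x; rewrite in_setI in_setU in_setI in_setD1 in_set1.
    apply/idP/eqP => [|->]; last by rewrite wB wI yv.
    case/andP => /orP [xB|/andP [_ xN]] /andP [xv xI].
      exact: inter1 eI (subsetP sYBY _ xB) xI.
    have : x \in W by apply: (subsetP s); rewrite in_setD1 xv xI.
    by rewrite in_setD xN.
  have [_ lt] := bs_lb tT (subsetUl _ _) pr.
  apply: leq_trans (lt _) (hb sTH); exists K => //.
  apply/pred0P => z; rewrite /= in_setD1; apply/andP => -[zB /andP [zy zP]].
  by move: zy; rewrite (inter1 eP (subsetP sYBY _ zB) zP) eqxx.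
Qed.

Lemma key Y : minset (tr S) Y -> #|Y| <= maxn b.+1 (2 * b).-1.
Proof.
move=> mY; case/minsetP': (mY) => tY priv.
have sYS := tr_sub tY.
have bW : bs W <= b by apply: hb; exact: sWH.
have bH : bs H <= b by apply: hb.
have [ltHS | geHS] := ltnP (alpha H) (alpha S).
-
  have vmis : forall I, mis S I -> v \in I.
    move=> I mI; apply/negPn/negP => vI.
    have : #|I| <= alpha H.
      apply: alpha_ge; last exact: mis_indep mI.
      apply/subsetP => x xI; rewrite !inE (subsetP (mis_sub mI) _ xI) andbT.
      by apply: contraNneq vI => <-.
    by rewrite (mis_card mI) leqNgt ltHS.
  have eW : (alpha W).+1 = alpha S.
    apply/eqP; rewrite eqn_leq alpha_W_S /=.
    case: (alpha_ex S) => I mI; case: (misv_W mI (vmis I mI)) => s [i c].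
    by have := alpha_ge s i; rewrite c; lia.
  case: (boolP (v \in Y)) => vY.
  + have t1 : tr S [set v].
      apply/trP; split; first by rewrite sub1set.
      by move=> I mI; exists v; rewrite ?inE ?vmis.
    have <- := minsetinf mY t1; first by rewrite cards1; lia.
    by rewrite sub1set.
  + have yv : forall y, y \in Y -> y != v by move=> y yY; apply: contraNneq vY => <-.
    have sYW : Y \subset W.
      apply/subsetP => y yY; case: (priv y yY) => I mI eI.
      have : y \in Y :&: I by rewrite eI set11.
      rewrite inE => /andP [_ yI].
      case: (misv_W mI (vmis I mI)) => s _; apply: (subsetP s).
      by rewrite !inE yI yv.
    have tW : tr W Y.
      apply/trP; split=> // J mJ; case/misP: mJ => sJW iJ cJ.
      case: (W_ext sJW iJ) => s [i c].
      have mI : mis S (v |: J) by apply: mis_ge => //; rewrite c cJ eW.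
      case: (tr_hit tY mI) => y yY; case/setU1P => [eyv|yJ].
        by rewrite -eyv yY in vY.
      by exists y.
    have pr : forall y, y \in Y -> exists2 I, mis W I & Y :&: I = [set y].
      move=> y yY; case: (priv y yY) => I mI eI; exists (I :\ v).
        case: (misv_W mI (vmis I mI)) => s [i c]; apply: mis_ge => //.
        by rewrite c -eW.
      apply/setP => z; have := eI; move/setP/(_ z); rewrite !inE => <-.
      by case: (eqVneq z v) => [->|nzv]; rewrite ?(negbTE vY) /=.
    have [le _] := bs_lb tW (subxx Y) pr.
    by apply: leq_trans le _; apply: leq_trans bW _; lia.
- have eH : alpha H = alpha S by apply/eqP; rewrite eqn_leq geHS alphaS // sHS.
  case: (boolP (v \in Y)) => vY.
  + pose Z := Y :\ v.
    have tH : tr H Z.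
      apply/trP; split.
        by apply/subsetP => z; rewrite !inE => /andP [-> /(subsetP sYS)].
      move=> I mI; case: (tr_hit tY (misH_S eH mI)) => y yY yI; exists y => //.
      rewrite !inE yY andbT; apply: contraNneq vNH => <-.
      exact: (subsetP (mis_sub mI)).
    have pr : forall y, y \in Z -> exists2 I, mis H I & Z :&: I = [set y].
      move=> y; rewrite !inE => /andP [yv yY].
      case: (priv y yY) => I mI eI.
      have vI : v \notin I.
        apply/negP => vI.
        have : v \in Y :&: I by rewrite inE vY vI.
        by rewrite eI inE eq_sym (negbTE yv).
      exists I; first exact: misS_H.
      apply/setP => z; have := eI; move/setP/(_ z); rewrite !inE => <-.
      by case: (eqVneq z v) => [->|nzv] /=; rewrite ?(negbTE vI) ?andbF.
    have [le _] := bs_lb tH (subxx Z) pr.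
    move: le; rewrite (cardsD1 v Y) vY -/Z => le.
    by have := leq_trans le bH; lia.
  + have := keyB eH vY mY; lia.
Qed.
End Key.

Section Split.
Variable C : {set V}.
Hypothesis clC : forall x y, x \in C -> y \notin C -> ~~ adj x y.

Lemma indepU I1 I2 : I1 \subset C -> [disjoint I2 & C] -> indep I1 -> indep I2 -> indep (I1 :|: I2).
Proof.
move=> s1 d2 i1 i2; apply/indepP => x y; rewrite !in_setU.
have n2 : forall z, z \in I2 -> z \notin C.
  by move=> z zI; apply/negP => zC; move/pred0P: d2 => /(_ z); rewrite /= zI zC.
case/orP => [xI|xI] /orP [yI|yI].
- by move/indepP: i1; apply.
- by apply: clC; [exact: (subsetP s1) | exact: n2].
- by rewrite adjC; apply: clC; [exact: (subsetP s1) | exact: n2].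
- by move/indepP: i2; apply.
Qed.

Lemma alpha_split S : alpha S = alpha (S :&: C) + alpha (S :\: C).
Proof.
apply/eqP; rewrite eqn_leq; apply/andP; split.
  apply: alpha_le => I sIS iI; rewrite -(cardsID C I); apply: leq_add.
    by apply: alpha_ge; [exact: setSI | apply: indepS iI; exact: subsetIl].
  by apply: alpha_ge; [exact: setSD | apply: indepS iI; exact: subsetDl].
case: (alpha_ex (S :&: C)) => I1 /misP [s1 i1 c1].
case: (alpha_ex (S :\: C)) => I2 /misP [s2 i2 c2].
have sC : I1 \subset C := subset_trans s1 (subsetIr _ _).
have dC : [disjoint I2 & C].
  apply/pred0P => z; rewrite /=; apply/negP => /andP [zI zC].
  by move: (subsetP s2 _ zI); rewrite in_setD zC.
have d12 : I1 :&: I2 = set0.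
  apply/setP => z; rewrite !in_set0 in_setI; apply/negP => /andP [z1 z2].
  by move/pred0P: dC => /(_ z); rewrite /= z2 (subsetP sC _ z1).
have cU : #|I1 :|: I2| = #|I1| + #|I2| by rewrite cardsU d12 cards0 subn0.
rewrite -c1 -c2 -cU; apply: alpha_ge; last exact: indepU.
by rewrite subUset (subset_trans s1 (subsetIl _ _)) (subset_trans s2 (subsetDl _ _)).
Qed.

Lemma mis_split S I : mis S I -> mis (S :&: C) (I :&: C) /\ mis (S :\: C) (I :\: C).
Proof.
case/misP => sIS iI cI.
have a1 : #|I :&: C| <= alpha (S :&: C).
  by apply: alpha_ge; [exact: setSI | apply: indepS iI; exact: subsetIl].
have a2 : #|I :\: C| <= alpha (S :\: C).
  by apply: alpha_ge; [exact: setSD | apply: indepS iI; exact: subsetDl].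
have e := cardsID C I; rewrite cI (alpha_split S) in e.
split; apply: mis_ge.
- exact: setSI.
- by apply: indepS iI; exact: subsetIl.
- by move: e a1 a2; clear; lia.
- exact: setSD.
- by apply: indepS iI; exact: subsetDl.
- by move: e a1 a2; clear; lia.
Qed.

Lemma mis_join S I1 I2 : mis (S :&: C) I1 -> mis (S :\: C) I2 -> mis S (I1 :|: I2).
Proof.
case/misP => s1 i1 c1; case/misP => s2 i2 c2.
have sC : I1 \subset C := subset_trans s1 (subsetIr _ _).
have dC : [disjoint I2 & C].
  apply/pred0P => z; rewrite /=; apply/negP => /andP [zI zC].
  by move: (subsetP s2 _ zI); rewrite in_setD zC.
have d12 : I1 :&: I2 = set0.
  apply/setP => z; rewrite !in_set0 in_setI; apply/negP => /andP [z1 z2].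
  by move/pred0P: dC => /(_ z); rewrite /= z2 (subsetP sC _ z1).
apply: mis_ge.
- by rewrite subUset (subset_trans s1 (subsetIl _ _)) (subset_trans s2 (subsetDl _ _)).
- exact: indepU.
- by rewrite cardsU d12 cards0 subn0 c1 c2 (alpha_split S).
Qed.

Lemma comp_minset S Y y : minset (tr S) Y -> y \in Y -> y \in C -> minset (tr (S :&: C)) Y.
Proof.
case/minsetP' => tY priv yY yC.
have sYC : Y \subset C.
  apply/subsetP => y' y'Y; apply/negPn/negP => y'C.
  case: (priv y yY) => I mI eI; case: (priv y' y'Y) => I' mI' eI'.
  have [m1 _] := mis_split mI'; have [_ m2] := mis_split mI.
  case: (tr_hit tY (mis_join m1 m2)) => z zY; rewrite in_setU in_setI in_setD.
  case/orP => [/andP [zI' zC] | /andP [zC zI]].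
    by move: y'C; rewrite -(inter1 eI' zY zI') zC.
  by move: zC; rewrite (inter1 eI zY zI) yC.
apply/minsetP'; split.
  apply/trP; split; first by rewrite subsetI (tr_sub tY) sYC.
  move=> J mJ; case: (alpha_ex S) => I0 mI0; have [_ m2] := mis_split mI0.
  case: (tr_hit tY (mis_join mJ m2)) => z zY; rewrite in_setU in_setD.
  case/orP => [zJ|/andP [zC _]]; first by exists z.
  by rewrite (subsetP sYC _ zY) in zC.
move=> y' y'Y; case: (priv y' y'Y) => I mI eI; have [m1 _] := mis_split mI.
exists (I :&: C) => //; rewrite setIA eI.
by apply/setP => z; rewrite !inE; case: (eqVneq z y') => [->|] //=; rewrite (subsetP sYC _ y'Y).
Qed.

End Split.
End Sets.

Section Emb.
Variables (G1 G2 : graph) (f : vert G1 -> vert G2).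
Hypothesis finj : injective f.
Hypothesis fadj : forall x y, adj (f x) (f y) = adj x y.

Lemma sub_im (A B : {set vert G1}) : (f @: A \subset f @: B) = (A \subset B).
Proof.
apply/idP/idP => [h|]; last exact: imsetS.
by apply/subsetP => x xA; rewrite -(mem_imset _ _ finj) (subsetP h) // imset_f.
Qed.

Lemma indep_im (I : {set vert G1}) : indep (f @: I) = indep I.
Proof.
apply/indepP/indepP => h.
  by move=> x y xI yI; rewrite -fadj; apply: h; apply: imset_f.
by move=> x y /imsetP [x' x'I ->] /imsetP [y' y'I ->]; rewrite fadj; apply: h.
Qed.

Lemma pre_im (T : {set vert G1}) (J : {set vert G2}) :
  J \subset f @: T -> f @: (f @^-1: J) = J /\ f @^-1: J \subset T.
Proof.
move=> sJ; split.
  apply/setP => y; apply/imsetP/idP => [[x] | yJ].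
    by rewrite inE => xJ ->.
  by case/imsetP: (subsetP sJ _ yJ) => x _ e; exists x; rewrite // inE -e.
apply/subsetP => x; rewrite inE => /(subsetP sJ); by rewrite (mem_imset _ _ finj).
Qed.

Lemma alpha_im (T : {set vert G1}) : alpha (f @: T) = alpha T.
Proof.
apply/eqP; rewrite eqn_leq; apply/andP; split.
  apply: alpha_le => J sJ iJ; have [e s] := pre_im sJ.
  rewrite -e card_imset //; apply: alpha_ge => //.
  by rewrite -indep_im e.
apply: alpha_le => I sI iI; rewrite -(card_imset _ finj); apply: alpha_ge.
  by rewrite sub_im.
by rewrite indep_im.
Qed.

Lemma mis_im (T I : {set vert G1}) : mis (f @: T) (f @: I) = mis T I.
Proof. by rewrite /mis sub_im indep_im card_imset // alpha_im. Qed.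

Lemma tr_im (T Y : {set vert G1}) : tr (f @: T) (f @: Y) = tr T Y.
Proof.
apply/trP/trP => -[s h]; split; first by rewrite -sub_im.
- move=> I mI; rewrite -mis_im in mI; case: (h _ mI) => z /imsetP [y yY ->].
  by rewrite (mem_imset _ _ finj) => yI; exists y.
- by rewrite sub_im.
move=> J mJ; have [e sJ] := pre_im (mis_sub mJ).
rewrite -e mis_im in mJ; case: (h _ mJ) => y yY yI; exists (f y); first exact: imset_f.
by rewrite -e imset_f.
Qed.

Lemma minset_im (T Y : {set vert G1}) : minset (tr (f @: T)) (f @: Y) = minset (tr T) Y.
Proof.
have iI : forall A B : {set vert G1}, f @: (A :&: B) = f @: A :&: f @: B.
  by move=> A B; apply: imsetI => x y _ _; apply: finj.
apply/minsetP'/minsetP' => -[t h]; split; first by rewrite -tr_im.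
- move=> y yY; case: (h (f y) (imset_f _ yY)) => J mJ eJ.
  have [e _] := pre_im (mis_sub mJ).
  exists (f @^-1: J); first by rewrite -mis_im e.
  by apply: (imset_inj finj); rewrite iI e eJ imset_set1.
- by rewrite tr_im.
move=> z /imsetP [y yY ->]; case: (h y yY) => I mI eI; exists (f @: I).
  by rewrite mis_im.
by rewrite -iI eI imset_set1.
Qed.

Lemma bs_im (T : {set vert G1}) : bs (f @: T) = bs T.
Proof.
apply/eqP; rewrite eqn_leq; apply/andP; split.
  apply: bs_le => Y' mY'; have [e _] := pre_im (tr_sub (minsetp mY')).
  rewrite -e card_imset //; apply: bs_ge; by rewrite -minset_im e.
apply: bs_le => Y mY; rewrite -(card_imset _ finj); apply: bs_ge; by rewrite minset_im.
Qed.

End Emb.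

Lemma bigmin_le (I : finType) (P : pred I) (F : I -> nat) d i0 :
  P i0 -> \big[minn/d]_(i | P i) F i <= F i0.
Proof.
move=> Pi0; have : i0 \in index_enum I by rewrite mem_index_enum.
elim: (index_enum I) => [//|j r IH]; rewrite in_cons big_cons => /orP [/eqP <-|ir].
  by rewrite Pi0; apply: geq_minl.
by case: (P j); [exact: leq_trans (geq_minr _ _) (IH ir) | exact: IH ir].
Qed.

Section Link.
Variable G : graph.
Local Notation V := (vert G).

Lemma vcP (X : {set V}) : vertex_cover X = indep (~: X).
Proof.
apply/forallP/indepP => [h x y | h x]; rewrite ?inE.
  move=> nx ny; apply/negP => a; move/forallP: (h x) => /(_ y).
  by rewrite a (negbTE nx) (negbTE ny).
apply/forallP => y; apply/implyP => a; apply/negPn/negP; rewrite negb_or => /andP [nx ny].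
by move: (h x y); rewrite !inE nx ny a => /(_ isT isT).
Qed.

Lemma OPTE : OPT G = #|V| - alpha [set: V].
Proof.
apply/eqP; rewrite eqn_leq; apply/andP; split.
  case: (alpha_ex [set: V]) => I /misP [_ iI cI].
  have vc : vertex_cover (~: I) by rewrite vcP setCK.
  rewrite /OPT; apply: leq_trans (bigmin_le (fun X : {set V} => #|X|) #|V| vc) _.
  by rewrite cardsCs setCK cI.
rewrite /OPT; elim/big_ind: _ => //.
- by rewrite leq_subr.
- by move=> x y hx hy; rewrite leq_min hx hy.
move=> X vc; rewrite vcP in vc.
have := alpha_ge (subsetT (~: X)) vc; rewrite cardsCs setCK.
by have := subset_leq_card (subsetT X); rewrite cardsT; lia.
Qed.

Lemma blockingE (Y : {set V}) : blocking Y = tr [set: V] Y.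
Proof.
apply/forallP/trP => [h | [_ h] X].
  split; first exact: subsetT.
  move=> I /misP [_ iI cI]; move: (h (~: I)); rewrite vcP setCK iI /=.
  rewrite OPTE cardsCs setCK cI eqxx /= => /subsetPn [y yY].
  by rewrite inE negbK => yI; exists y.
apply/implyP => /andP [vc /eqP cX]; rewrite vcP in vc.
have mI : mis [set: V] (~: X).
  apply/misP; split; [exact: subsetT | exact: vc | ].
  rewrite cardsCs setCK cX OPTE.
  have := alpha_sub [set: V]; rewrite cardsT; lia.
case: (h _ mI) => y yY; rewrite inE => yX.
by apply/negP => /subsetP /(_ y yY); rewrite (negbTE yX).
Qed.

Lemma betaE : beta G = bs [set: V].
Proof.
rewrite /beta /bs; apply: eq_bigl => Y; rewrite /minimal_blocking.
by apply: minset_eq => Z; rewrite blockingE.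
Qed.

Lemma val_setT (S0 : {set V}) : val @: [set: vert (induced S0)] = S0.
Proof.
apply/setP => x; apply/imsetP/idP => [[y _ ->]|xS]; first exact: valP.
by exists (Sub x xS : vert (induced S0)).
Qed.

Lemma bs_ind (S0 T : {set V}) : T \subset S0 -> bs T = bs (val @^-1: T : {set vert (induced S0)}).
Proof.
move=> sT; have vinj : injective (val : vert (induced S0) -> V) := val_inj.
have sT' : T \subset val @: [set: vert (induced S0)] by rewrite val_setT.
have [e _] := pre_im vinj sT'.
by rewrite -{1}e (bs_im vinj).
Qed.


Lemma comp_closed (x : V) : forall z w, z \in [set y | connect (@adj G) x y] ->
  w \notin [set y | connect (@adj G) x y] -> ~~ adj z w.
Proof.
move=> z w; rewrite !inE => cz; apply: contra => a.
by apply: connect_trans cz (connect1 a).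
Qed.

End Link.

Lemma beta_ind (G : graph) (S0 : {set vert G}) : beta (induced S0) = bs S0.
Proof.
by rewrite betaE -(@bs_im (induced S0) G val val_inj) ?val_setT.
Qed.

Definition gf (b0 d : nat) : nat := iter d (fun g => maxn g.+1 (2 * g).-1) b0.

Lemma gf_mono b0 d : gf b0 d <= gf b0 d.+1.
Proof. by rewrite /gf iterS leq_max leqnSn. Qed.

Lemma gf_ge b0 d : b0 <= gf b0 d.
Proof. by elim: d => // d IH; apply: leq_trans IH (gf_mono _ _). Qed.

Lemma ub (C : graph -> Prop) b0 (hC : forall G, C G -> forall S : {set vert G}, bs S <= b0)
  d G : ed_le C d G -> forall S : {set vert G}, bs S <= gf b0 d.
Proof.
elim => {d G}.
- move=> d G CG S; exact: leq_trans (hC G CG S) (gf_ge _ _).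
- move=> d G v _ _ IH S.
  have hb : forall T : {set vert G}, T \subset [set~ v] -> bs T <= gf b0 d.
    by move=> T sT; rewrite (bs_ind sT); apply: IH.
  case: (boolP (v \in S)) => vS.
    apply: bs_le => Y mY; rewrite /gf iterS -/(gf b0 d).
    apply: (key vS _ mY) => T sT; apply: hb; apply: subset_trans sT _.
    by apply/subsetP => z; rewrite !inE => /andP [].
  apply: leq_trans (gf_mono _ _); apply: hb.
  by apply/subsetP => z zS; rewrite !inE; apply: contraNneq vS => <-.
- move=> d G _ _ IH S; apply: bs_le => Y mY.
  case: (set_0Vmem Y) => [->|[y yY]]; first by rewrite cards0.
  pose Cy := [set z | connect (@adj G) y z].
  have yC : y \in Cy by rewrite inE connect0.
  have m := comp_minset (comp_closed (x := y)) mY yY yC.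
  apply: leq_trans (bs_ge m) _.
  rewrite (bs_ind (subsetIr S Cy)); exact: IH.
Qed.

Lemma connect_map (G H : graph) (f : vert G -> vert H)
  (fadj : forall x y, adj (f x) (f y) = adj x y) x y :
  connect (@adj G) x y -> connect (@adj H) (f x) (f y).
Proof.
case/connectP => p pp ->; elim: p x pp => [|w p IH] x /=; first by rewrite connect0.
case/andP => a pp; apply: connect_trans (IH w pp); apply: connect1; by rewrite fadj.
Qed.

Lemma iso_sym G H : iso G H -> iso H G.
Proof.
case=> f [[g fg gf] fadj]; exists g; split; first by exists f.
by move=> x y; rewrite -fadj !gf.
Qed.

Lemma connected_iso G H : iso G H -> connected G -> connected H.
Proof.
case=> f [[g fg gf] fadj] /andP [c0 /forallP ca]; apply/andP; split.
  by case/card_gt0P: c0 => x _; apply/card_gt0P; exists (f x).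
apply/forallP => a; apply/forallP => b; rewrite -(gf a) -(gf b).
by apply: connect_map => //; move/forallP: (ca (g a)); apply.
Qed.

Section IsoInd.
Variables (G H : graph) (f : vert G -> vert H) (g : vert H -> vert G).
Hypotheses (fg : cancel f g) (gf : cancel g f).
Hypothesis fadj : forall x y, adj (f x) (f y) = adj x y.

Lemma gadj x y : adj (g x) (g y) = adj x y.
Proof. by rewrite -fadj !gf. Qed.

Lemma g_mem (S : {set vert G}) y : y \in f @: S -> g y \in S.
Proof. by case/imsetP => x xS ->; rewrite fg. Qed.

Lemma iso_induced (S : {set vert G}) : iso (induced S) (induced (f @: S)).
Proof.
pose h (x : vert (induced S)) : vert (induced (f @: S)) := Sub (f (val x)) (imset_f f (valP x)).
pose h' (y : vert (induced (f @: S))) : vert (induced S) := Sub (g (val y)) (g_mem (valP y)).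
exists h; split.
  by exists h' => x; apply: val_inj; rewrite /= ?fg ?gf.
by move=> x y; rewrite /= /induced_adj /= fadj.
Qed.

Lemma im_setC1 v : f @: [set~ v] = [set~ f v].
Proof.
apply/setP => y; rewrite !inE; apply/imsetP/idP => [[x]|ny].
  by rewrite !inE => nx ->; apply: contraNneq nx => /(can_inj fg) ->.
by exists (g y); rewrite ?gf // !inE; apply: contraNneq ny => <-; rewrite gf.
Qed.

Lemma im_comp x : f @: [set y | connect (@adj G) x y] = [set y | connect (@adj H) (f x) y].
Proof.
apply/setP => y; rewrite !inE; apply/imsetP/idP => [[z]|c].
  by rewrite inE => c ->; apply: connect_map.
exists (g y); rewrite ?gf // inE -(fg x); exact: connect_map gadj _ _ c.
Qed.

End IsoInd.

Lemma ed_iso (C : graph -> Prop) (hC : iso_closed C) d G :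
  ed_le C d G -> forall H, iso G H -> ed_le C d H.
Proof.
elim => {d G}.
- by move=> d G CG H iGH; apply: ed_in; apply: hC CG.
- move=> d G v cG _ IH H iGH; have [f [[g fg gf] fadj]] := iGH.
  apply: (@ed_del C d H (f v)); first exact: connected_iso cG.
  apply: IH; rewrite /delv -(im_setC1 fg gf); exact: iso_induced fg gf fadj _.
- move=> d G ncG _ IH H iGH; have [f [[g fg gf] fadj]] := iGH.
  apply: ed_comp.
    by apply: contra ncG; apply: connected_iso; apply: iso_sym.
  move=> x; rewrite -(gf x); apply: IH; rewrite /component -(im_comp fg gf fadj).
  exact: iso_induced fg gf fadj _.
Qed.

Lemma one_eq (T : finType) : #|T| = 1 -> exists x0 : T, forall x : T, x = x0.
Proof.
move=> c; case: (mem_card1 c) => x0 e; exists x0 => x.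
by have := e x; rewrite !inE => /esym /eqP.
Qed.

Lemma iso_one (A B : graph) : #|vert A| = 1 -> #|vert B| = 1 -> iso A B.
Proof.
move=> cA cB; case: (one_eq cA) => a0 ea; case: (one_eq cB) => b0 eb.
exists (fun _ => b0); split.
  by exists (fun _ => a0) => x; rewrite ?(ea x) ?(eb x).
by move=> x y; rewrite (ea x) (ea y) !adj_irr.
Qed.

Section CompConn.
Variables (G : graph) (x : vert G).
Local Notation Cx := [set y | connect (@adj G) x y].

Lemma path_lift p u (hu : u \in Cx) : path (@adj G) u p -> forall hz : last u p \in Cx,
  connect (@adj (component x)) (Sub u hu) (Sub (last u p) hz).
Proof.
elim: p u hu => [|w p IH] u hu /=.
  move=> _ hz; have -> : hz = hu by apply: bool_irrelevance.
  exact: connect0.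
case/andP => a pp hz.
have hw : w \in Cx by move: hu; rewrite !inE => c; apply: connect_trans c (connect1 a).
apply: connect_trans (IH w hw pp hz); apply: connect1; done.
Qed.

Lemma comp_connected : connected (component x).
Proof.
have hx : x \in Cx by rewrite inE connect0.
pose x0 : vert (component x) := Sub x hx.
have c0 : forall a : vert (component x), connect (@adj (component x)) x0 a.
  case=> y hy; have := hy; rewrite inE => /connectP [p pp ey].
  move: hy; rewrite ey => hy; exact: path_lift.
have sym : connect_sym (@adj (component x)) by apply: sym_connect_sym; exact: adj_sym.
apply/andP; split; first by apply/card_gt0P; exists x0.
apply/forallP => a; apply/forallP => b; apply: connect_trans (c0 b).
by rewrite sym.
Qed.

End CompConn.

Lemma comp_witness (G : graph) (Y : {set vert G}) (y : vert G) :
  minset (tr [set: vert G]) Y -> y \in Y ->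
  exists Z : {set vert (component y)}, minset (tr [set: vert (component y)]) Z /\ #|Z| = #|Y|.
Proof.
move=> mY yY.
have yC : y \in [set z | connect (@adj G) y z] by rewrite inE connect0.
have m := comp_minset (comp_closed (x := y)) mY yY yC.
rewrite setTI in m.
have vinj : injective (val : vert (component y) -> vert G) := val_inj.
have sY : Y \subset val @: [set: vert (component y)].
  by rewrite val_setT; exact: tr_sub (minsetp m).
have [e _] := pre_im vinj sY.
exists (val @^-1: Y); split.
  by rewrite -(minset_im vinj) // e val_setT.
by rewrite -{2}e card_imset.
Qed.

Lemma iso_img (A B : graph) (h : vert A -> vert B) (hinj : injective h)
  (hadj : forall x y, adj (h x) (h y) = adj x y) : iso A (induced (h @: [set: vert A])).
Proof.
pose k (b : vert A) : vert (induced (h @: [set: vert A])) := Sub (h b) (imset_f h (in_setT b)).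
have kinj : injective k by move=> x y /(congr1 val) /= /hinj.
exists k; split; last by move=> x y; rewrite /= /induced_adj /= hadj.
apply: (@inj_card_bij _ _ k kinj).
rewrite card_sig.
have -> : #|[pred x | x \in h @: [set: vert A]]| = #|h @: [set: vert A]| by apply: eq_card.
by rewrite card_imset // cardsT.
Qed.

Section Double.
Variables (F : graph) (Z : {set vert F}) (z2 : vert F).
Hypothesis z2Z : z2 \in Z.
Local Notation VF := (vert F).

Definition dadj (x y : option (VF + VF)) : bool :=
  match x, y with
  | None, Some (inl b) => b \in Z
  | Some (inl a), None => a \in Z
  | None, Some (inr b) => b == z2
  | Some (inr a), None => a == z2
  | Some (inl a), Some (inl b) => adj a b
  | Some (inr a), Some (inr b) => adj a b
  | _, _ => false
  end.

Lemma dadj_sym : symmetric dadj.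
Proof. by case=> [[a|a]|] [[b|b]|] //=; rewrite adj_sym. Qed.

Lemma dadj_irr : irreflexive dadj.
Proof. by case=> [[a|a]|] //=; exact: adj_irr. Qed.

Definition D : graph := @Graph (option (VF + VF)) dadj dadj_sym dadj_irr.

Definition il (a : VF) : vert D := Some (inl a).
Definition ir (a : VF) : vert D := Some (inr a).
Lemma il_inj : injective il. Proof. by move=> a b []. Qed.
Lemma ir_inj : injective ir. Proof. by move=> a b []. Qed.
Lemma il_adj a b : adj (il a) (il b) = adj a b. Proof. by []. Qed.
Lemma ir_adj a b : adj (ir a) (ir b) = adj a b. Proof. by []. Qed.

Definition LL (I : {set vert D}) : {set VF} := il @^-1: I.
Definition RR (I : {set vert D}) : {set VF} := ir @^-1: I.

Lemma indep_LR (I : {set vert D}) : indep I ->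
  [/\ indep (LL I), indep (RR I) & None \in I -> [disjoint LL I & Z] /\ z2 \notin RR I].
Proof.
move/indepP => h; split.
- by apply/indepP => x y; rewrite !inE => xI yI; rewrite -il_adj; apply: h.
- by apply/indepP => x y; rewrite !inE => xI yI; rewrite -ir_adj; apply: h.
move=> NI; split.
  apply/pred0P => c /=; apply/negP => /andP [cL cZ].
  by move: (h None (il c) NI); rewrite inE in cL; move/(_ cL); rewrite /= cZ.
by rewrite inE; apply/negP => rI; move: (h None (ir z2) NI rI); rewrite /= eqxx.
Qed.

Definition mkI (b : bool) (P Q : {set VF}) : {set vert D} :=
  (if b then [set None] else set0) :|: il @: P :|: ir @: Q.

Lemma memI b (P Q : {set VF}) (x : vert D) : (x \in mkI b P Q) =
  match x with None => b | Some (inl a) => a \in P | Some (inr a) => a \in Q end.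
Proof.
rewrite /mkI !in_setU; case: x => [[a|a]|].
- rewrite (mem_imset _ _ il_inj); have -> : (Some (inl a) : vert D) \in ir @: Q = false.
    by apply/negP => /imsetP [?].
  by case: b; rewrite ?inE /= ?orbF.
- rewrite (mem_imset _ _ ir_inj); have -> : (Some (inr a) : vert D) \in il @: P = false.
    by apply/negP => /imsetP [?].
  by case: b; rewrite ?inE /= ?orbF.
- have -> : (None : vert D) \in il @: P = false by apply/negP => /imsetP [?].
  have -> : (None : vert D) \in ir @: Q = false by apply/negP => /imsetP [?].
  by case: b; rewrite ?inE /= ?orbF.
Qed.

Lemma mkI_LL b P Q : LL (mkI b P Q) = P.
Proof. by apply/setP => a; rewrite inE memI. Qed.
Lemma mkI_RR b P Q : RR (mkI b P Q) = Q.
Proof. by apply/setP => a; rewrite inE memI. Qed.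

Lemma mem_il (P : {set VF}) (x : vert D) : (x \in il @: P) = match x with Some (inl c) => c \in P | _ => false end.
Proof.
case: x => [[c|c]|]; first by rewrite (mem_imset _ _ il_inj).
all: by apply/negP => /imsetP [?].
Qed.
Lemma mem_ir (P : {set VF}) (x : vert D) : (x \in ir @: P) = match x with Some (inr c) => c \in P | _ => false end.
Proof.
case: x => [[c|c]|]; last 2 first.
- by rewrite (mem_imset _ _ ir_inj).
all: by apply/negP => /imsetP [?].
Qed.
Lemma mem_b (b : bool) (x : vert D) : (x \in (if b then [set None] else set0)) = (x == None) && b.
Proof. by case: b; rewrite ?inE ?andbT ?andbF. Qed.

Lemma card_mkI b P Q : #|mkI b P Q| = b + #|P| + #|Q|.
Proof.
rewrite /mkI cardsU (cardsU (if b then _ else _)) (card_imset _ il_inj) (card_imset _ ir_inj).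
have e1 : (if b then [set None] else set0) :&: il @: P = set0.
  apply/setP => x; rewrite in_setI mem_b mem_il in_set0.
  by case: x => [[c|c]|]; rewrite ?andbF.
have e2 : ((if b then [set None] else set0) :|: il @: P) :&: ir @: Q = set0.
  apply/setP => x; rewrite in_setI in_setU mem_b mem_il mem_ir in_set0.
  by case: x => [[c|c]|]; rewrite ?andbF ?orbF.
rewrite e1 e2 !cards0 !subn0; congr (_ + _ + _).
by clear e1 e2; case: b; rewrite ?cards1 ?cards0.
Qed.

Lemma cardD (I : {set vert D}) : #|I| = (None \in I) + #|LL I| + #|RR I|.
Proof.
have e : mkI (None \in I) (LL I) (RR I) = I.
  by apply/setP => x; rewrite memI; case: x => [[c|c]|]; rewrite ?inE.
by rewrite -{1}e card_mkI.
Qed.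

Lemma mkI_indep (b : bool) (P Q : {set VF}) : indep P -> indep Q -> (b -> [disjoint P & Z] /\ z2 \notin Q) ->
  indep (mkI b P Q).
Proof.
move=> /indepP iP /indepP iQ hb; apply/indepP => x y; rewrite !memI.
have nZ : b -> forall c, c \in P -> c \notin Z.
  move=> bb c cP; case: (hb bb) => /pred0P /(_ c) /= e _; by apply/negP => cZ; rewrite cP cZ in e.
have n2 : b -> forall c, c \in Q -> c != z2.
  by move=> bb c cQ; case: (hb bb) => _ h; apply: contraNneq h => <-.
case: x => [[a|a]|]; case: y => [[c|c]|] //=.
- exact: iP.
- by move=> aP bb; apply: nZ.
- exact: iQ.
- by move=> aQ bb; apply: n2.
- by move=> bb cP; apply: nZ.
- by move=> bb cQ; apply: n2.
Qed.

Hypothesis mZ : minset (tr [set: VF]) Z.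
Local Notation a := (alpha [set: VF]).

Lemma dis_lt P : indep P -> [disjoint P & Z] -> #|P| < a.
Proof.
move=> iP dP; rewrite ltn_neqAle alpha_ge ?subsetT // andbT; apply/negP => /eqP e.
case/minsetP': mZ => tZ _.
have mP : mis [set: VF] P by apply/misP; split; rewrite ?subsetT.
case: (tr_hit tZ mP) => z zZ zP.
by move/pred0P: dP => /(_ z); rewrite /= zP zZ.
Qed.

Lemma privF z : z \in Z -> exists2 P, mis [set: VF] P & Z :&: P = [set z].
Proof. by case/minsetP': mZ => _; apply. Qed.

Lemma a_pos : 0 < a.
Proof.
case: (privF z2Z) => P mP eP; rewrite -(mis_card mP); apply/card_gt0P; exists z2.
by have := inter1_mem eP; case.
Qed.

Lemma alphaD : alpha [set: vert D] = 2 * a.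
Proof.
apply/eqP; rewrite eqn_leq; apply/andP; split.
  apply: alpha_le => I _ iI; rewrite cardD; case: (indep_LR iI) => iL iR h.
  have bL := alpha_ge (subsetT (LL I)) iL; have bR := alpha_ge (subsetT (RR I)) iR.
  case: (boolP (None \in I)) => NI /=.
    have := dis_lt iL (h NI).1; move: bR; clear; lia.
  move: bL bR; clear; lia.
case: (alpha_ex [set: VF]) => P /misP [_ iP cP].
have := alpha_ge (subsetT (mkI false P P)) (mkI_indep iP iP (fun bb => False_ind _ (notF bb))).
by rewrite card_mkI cP /=; lia.
Qed.

Definition YD : {set vert D} := il @: Z :|: ir @: (Z :\ z2).

Lemma memY (x : vert D) : (x \in YD) =
  match x with None => false | Some (inl c) => c \in Z | Some (inr c) => (c != z2) && (c \in Z) end.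
Proof.
have -> : YD = mkI false Z (Z :\ z2) by rewrite /YD /mkI /= set0U.
rewrite memI; case: x => [[c|c]|] //.
by rewrite in_setD1.
Qed.

Lemma cardYD : #|YD| = (#|Z| + #|Z|).-1.
Proof.
have -> : YD = mkI false Z (Z :\ z2) by rewrite /YD /mkI /= set0U.
rewrite card_mkI /= (cardsD1 z2 Z) z2Z; lia.
Qed.

Lemma YD_min : minset (tr [set: vert D]) YD.
Proof.
apply/minsetP'; split.
  apply/trP; split; first exact: subsetT.
  move=> I /misP [_ iI cI]; rewrite alphaD cardD in cI.
  case: (indep_LR iI) => iL iR h.
  have bL := alpha_ge (subsetT (LL I)) iL; have bR := alpha_ge (subsetT (RR I)) iR.
  case/minsetP': mZ => tZ _.
  case: (boolP (None \in I)) => NI.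
    have lL := dis_lt iL (h NI).1.
    have mR : mis [set: VF] (RR I).
      apply/misP; split; rewrite ?subsetT //; move: cI bR lL; rewrite NI /=; clear; lia.
    case: (tr_hit tZ mR) => z zZ zR; exists (ir z); last by move: zR; rewrite inE.
    rewrite memY /= zZ andbT; apply: contraNneq (h NI).2 => <-; exact: zR.
  have mL : mis [set: VF] (LL I).
    apply/misP; split; rewrite ?subsetT //; move: cI bR bL; rewrite (negbTE NI) /=; clear; lia.
  case: (tr_hit tZ mL) => z zZ zL; exists (il z); last by move: zL; rewrite inE.
  by rewrite memY.
case: (privF z2Z) => P2 mP2 eP2.
have [_ z2P2] := inter1_mem eP2.
move=> [[z|z]|]; rewrite memY // => zZ.
- case: (privF zZ) => Pz mPz ePz.
  exists (mkI false Pz P2).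
    apply: mis_ge; rewrite ?subsetT //.
      exact: mkI_indep (mis_indep mPz) (mis_indep mP2) (fun bb => False_ind _ (notF bb)).
    by rewrite alphaD card_mkI (mis_card mPz) (mis_card mP2) /=; lia.
  apply/setP => x; rewrite in_setI memY memI in_set1.
  case: x => [[c|c]|] //=.
  + apply/andP/eqP => [[cZ cP]|[->]]; first by rewrite (inter1 ePz cZ cP).
    by have := inter1_mem ePz; case.
  + apply/negP => /andP [/andP [cn cZ] cP]; by rewrite (inter1 eP2 cZ cP) eqxx in cn.
- case/andP: zZ => zn zZ.
  case: (privF zZ) => Pz mPz ePz.
  have z2Pz : z2 \notin Pz.
    by apply/negP => h; move: zn; rewrite (inter1 ePz z2Z h) eqxx.
  have dP : [disjoint P2 :\ z2 & Z].
    apply/pred0P => c /=; rewrite in_setD1; apply/negP => /andP [/andP [cn cP] cZ].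
    by rewrite (inter1 eP2 cZ cP) eqxx in cn.
  exists (mkI true (P2 :\ z2) Pz).
    apply: mis_ge; rewrite ?subsetT //.
      apply: mkI_indep; [by apply: indepS (mis_indep mP2); exact: subD1set | exact: mis_indep mPz | by move=> _; split].
    have cP2 := mis_card mP2; rewrite (cardsD1 z2 P2) z2P2 in cP2.
    rewrite alphaD card_mkI (mis_card mPz) /=; have := a_pos; move: cP2; clear; lia.
  apply/setP => x; rewrite in_setI memY memI in_set1.
  case: x => [[c|c]|] //=.
  + rewrite in_setD1; apply/negP => /andP [cZ /andP [cn cP]].
    by rewrite (inter1 eP2 cZ cP) eqxx in cn.
  + apply/andP/eqP => [[/andP [cn cZ] cP]|[->]]; first by rewrite (inter1 ePz cZ cP).
    by rewrite zn zZ; have := inter1_mem ePz; case.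
Qed.

End Double.

Section DoubleConn.
Variables (F : graph) (Z : {set vert F}) (z2 : vert F).
Hypothesis z2Z : z2 \in Z.
Hypothesis Fc : connected F.
Local Notation DD := (D Z z2).

Lemma Fconn a b : connect (@adj F) a b.
Proof. by case/andP: Fc => _ /forallP /(_ a) /forallP /(_ b). Qed.

Lemma Dconn : connected DD.
Proof.
have toN : forall x : vert DD, connect (@adj DD) x None.
  case=> [[c|c]|]; last exact: connect0.
  - apply: connect_trans (connect_map (@il_adj F Z z2) (Fconn c z2)) _.
    by apply: connect1; rewrite /= z2Z.
  - apply: connect_trans (connect_map (@ir_adj F Z z2) (Fconn c z2)) _.
    by apply: connect1; rewrite /= eqxx.
have sym : connect_sym (@adj DD) by apply: sym_connect_sym; exact: adj_sym.
apply/andP; split; first by apply/card_gt0P; exists None.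
apply/forallP => x; apply/forallP => y; apply: connect_trans (toN x) _.
by rewrite sym.
Qed.

Definition side (x : option (vert F + vert F)) : bool := if x is Some (inl _) then true else false.

Local Notation G' := (delv (None : vert DD)).

Lemma side_closed (x y : vert G') : adj x y -> side (val x) = side (val y).
Proof.
case: x => [[[c|c]|] px]; case: y => [[[d|d]|] py] //=; by rewrite !inE in px py.
Qed.

Lemma notNone (s : bool) (c : vert F) : (if s then il Z z2 c else ir Z z2 c) \in [set~ (None : vert DD)].
Proof. by case: s; rewrite !inE. Qed.

Definition hs (s : bool) (c : vert F) : vert G' := exist _ (if s then il Z z2 c else ir Z z2 c) (notNone s c).

Lemma hs_inj s : injective (hs s).
Proof.
move=> a b /(congr1 val) /=; case: s; [exact: il_inj | exact: ir_inj].
Qed.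

Lemma hs_adj s a b : adj (hs s a) (hs s b) = adj a b.
Proof. by case: s. Qed.

Lemma side_hs s c : side (val (hs s c)) = s.
Proof. by case: s. Qed.

Lemma every (x : vert G') : exists s c, x = hs s c.
Proof.
case: x => [[[c|c]|] p].
- by exists true, c; apply: val_inj.
- by exists false, c; apply: val_inj.
- by exfalso; move: p; rewrite !inE.
Qed.

Lemma mem_hs s (y : vert G') : (y \in hs s @: [set: vert F]) = (side (val y) == s).
Proof.
apply/imsetP/eqP => [[c _ ->]|e]; first exact: side_hs.
case: (every y) => s' [c ey]; exists c => //; move: e; rewrite ey side_hs => ->.
by [].
Qed.

Lemma cl_side s : closed (@adj G') [pred y : vert G' | side (val y) == s].
Proof. by move=> x y a; rewrite !inE (side_closed a). Qed.

Lemma comp_hs s c : [set y | connect (@adj G') (hs s c) y] = hs s @: [set: vert F].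
Proof.
apply/setP => y; rewrite inE; apply/idP/idP => [cy|].
  rewrite mem_hs; have := closed_connect (cl_side s) cy; rewrite !inE side_hs eqxx.
  by move=> <-.
case/imsetP => c' _ ->; apply: (@connect_map F G' (hs s) (hs_adj s)); exact: Fconn.
Qed.

Lemma iso_comp s c : iso F (component (hs s c)).
Proof. rewrite /component comp_hs; exact: iso_img (@hs_inj s) (hs_adj s). Qed.

Lemma Ded (C : graph -> Prop) (hC : iso_closed C) d : ed_le C d F -> ed_le C d.+1 DD.
Proof.
move=> Fe; apply: (@ed_del C d DD None Dconn); apply: ed_comp.
  apply/negP => /andP [_ /forallP /(_ (hs true z2)) /forallP /(_ (hs false z2)) cn].
  by have := closed_connect (cl_side true) cn; rewrite !inE !side_hs.
move=> x; case: (every x) => s [c ->]; exact: (@ed_iso C hC d F Fe _ (iso_comp s c)).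
Qed.

End DoubleConn.

Lemma dbl_iter (C : graph -> Prop) (hC : iso_closed C) n : forall d F (Z : {set vert F}),
  connected F -> ed_le C d F -> minset (tr [set: vert F]) Z -> 0 < #|Z| ->
  exists G, [/\ connected G, ed_le C (n + d) G &
    exists Z' : {set vert G}, minset (tr [set: vert G]) Z' /\ #|Z'| = #|Z|.-1 * 2 ^ n + 1].
Proof.
elim: n => [|n IH] d F Z cF eF mZ pZ.
  exists F; split => //; exists Z; split => //; rewrite expn0 muln1; lia.
case: (IH d F Z cF eF mZ pZ) => G [cG eG [Z' [mZ' cZ']]].
have : 0 < #|Z'| by rewrite cZ' addn1.
case/card_gt0P => z2 z2Z.
exists (D Z' z2); split.
- exact: Dconn z2Z cG.
- rewrite addSn; exact: (Ded z2Z cG hC eG).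
exists (YD Z' z2); split; first exact: YD_min z2Z mZ'.
rewrite (cardYD z2Z mZ') cZ' expnS mulnCA; move: (#|Z|.-1 * 2 ^ n) => x.
clear; lia.
Qed.

Lemma bs_attained (G : graph) (S : {set vert G}) : 0 < bs S -> exists2 Y, minset (tr S) Y & #|Y| = bs S.
Proof.
case: (pickP [pred Y | minset (tr S) Y]) => [Y0 h0 | h0] pos.
  have : 0 < #|[pred Y | minset (tr S) Y]| by apply/card_gt0P; exists Y0.
  case/(eq_bigmax_cond (fun Y : {set vert G} => #|Y|)) => Y hY e.
  by exists Y => //; rewrite /bs -e.
by move: pos; rewrite /bs big_pred0.
Qed.

Lemma gfE2 b d : 2 <= b -> gf b d = (b - 1) * 2 ^ d + 1.
Proof.
move=> b2; elim: d => [|d IH]; first by rewrite /gf /= expn0 muln1; lia.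
rewrite /gf iterS -/(gf b d) IH expnS mulnCA.
have : 0 < (b - 1) * 2 ^ d by rewrite muln_gt0 expn_gt0 subn_gt0 b2.
move: ((b - 1) * 2 ^ d) => x; clear; lia.
Qed.

Lemma gf1S d : gf 1 d.+1 = 2 ^ d + 1.
Proof.
elim: d => [|d IH]; first by [].
rewrite /gf iterS -/(gf 1 d.+1) IH expnS.
have : 1 <= 2 ^ d by rewrite expn_gt0.
move: (2 ^ d) => x; clear; lia.
Qed.

Lemma gf0SS d : gf 0 d.+2 = 2 ^ d + 1.
Proof.
elim: d => [|d IH]; first by [].
rewrite /gf iterS -/(gf 0 d.+2) IH expnS.
have : 1 <= 2 ^ d by rewrite expn_gt0.
move: (2 ^ d) => x; clear; lia.
Qed.

Lemma card_delv (G : graph) (v : vert G) : #|vert (delv v)| = #|vert G|.-1.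
Proof.
rewrite card_sig -(cardsC1 v); apply: eq_card => x; by rewrite !inE.
Qed.

Lemma card_induced (G : graph) (S : {set vert G}) : #|vert (induced S)| = #|S|.
Proof. by rewrite card_sig; apply: eq_card => x; rewrite !inE. Qed.

Lemma one_connected (A : graph) : #|vert A| = 1 -> connected A.
Proof.
move=> c; case: (one_eq c) => x0 e; apply/andP; split; first by rewrite c.
by apply/forallP => x; apply/forallP => y; rewrite (e x) (e y) connect0.
Qed.

Lemma one_beta (A : graph) : #|vert A| = 1 ->
  exists Z : {set vert A}, minset (tr [set: vert A]) Z /\ #|Z| = 1.
Proof.
move=> c; case: (one_eq c) => x0 e.
have i1 : indep [set x0] by apply/indepP => x y; rewrite !inE => /eqP -> /eqP ->; rewrite adj_irr.
have a1 : alpha [set: vert A] = 1.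
  apply/eqP; rewrite eqn_leq; apply/andP; split.
    by apply: leq_trans (alpha_sub _) _; rewrite cardsT c.
  by have := alpha_ge (subsetT _) i1; rewrite cards1.
exists [set x0]; split; last exact: cards1.
apply/minsetP'; split.
  apply/trP; split; first exact: subsetT.
  move=> I mI; have : 0 < #|I| by rewrite (mis_card mI) a1.
  by case/card_gt0P => y yI; exists y => //; rewrite inE (e y).
move=> y; rewrite inE => /eqP ->; exists [set x0]; last by rewrite setIid.
by apply: mis_ge; rewrite ?subsetT // cards1 a1.
Qed.

Lemma one_vertex_ed (A : graph) : #|vert A| = 1 -> ed_le empty_class 1 A.
Proof.
move=> c; case: (one_eq c) => x0 e.
apply: (@ed_del empty_class 0 A x0 (one_connected c)); apply: ed_in.
by rewrite /empty_class card_delv c.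
Qed.

Definition k2adj (x y : bool) : bool := x != y.
Lemma k2_sym : symmetric k2adj. Proof. by move=> x y; rewrite /k2adj eq_sym. Qed.
Lemma k2_irr : irreflexive k2adj. Proof. by move=> x; rewrite /k2adj eqxx. Qed.
Definition K2 : graph := @Graph bool k2adj k2_sym k2_irr.

Definition k1adj (x y : unit) : bool := false.
Lemma k1_sym : symmetric k1adj. Proof. by []. Qed.
Lemma k1_irr : irreflexive k1adj. Proof. by []. Qed.
Definition K1 : graph := @Graph unit k1adj k1_sym k1_irr.

Lemma K2_conn : connected K2.
Proof.
apply/andP; split; first by apply/card_gt0P; exists true.
apply/forallP => x; apply/forallP => y; case: (eqVneq x y) => [->|nxy]; first exact: connect0.
exact: connect1.
Qed.

Lemma K2_min : minset (tr [set: vert K2]) [set: vert K2] /\ #|[set: vert K2]| = 2.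
Proof.
split; last by rewrite cardsT card_bool.
have a1 : alpha [set: vert K2] = 1.
  apply/eqP; rewrite eqn_leq; apply/andP; split.
    apply: alpha_le => I _ iI; apply/card_le1_eqP => x y xI yI; apply/eqP.
    by apply/negPn/negP => nxy; move/indepP: iI => /(_ y x yI xI); rewrite /= /k2adj nxy.
  have i1 : indep [set true :> vert K2] by apply/indepP => x y; rewrite !inE => /eqP -> /eqP ->; rewrite adj_irr.
  by have := alpha_ge (subsetT _) i1; rewrite cards1.
apply/minsetP'; split.
  apply/trP; split; first exact: subsetT.
  move=> I mI; have : 0 < #|I| by rewrite (mis_card mI) a1.
  by case/card_gt0P => y yI; exists y.
move=> y _; exists [set y]; last by rewrite setTI.
apply: mis_ge; rewrite ?subsetT ?cards1 ?a1 //.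
by apply/indepP => x z; rewrite !inE => /eqP -> /eqP ->; rewrite adj_irr.
Qed.

Lemma empty_iso : iso_closed empty_class.
Proof. by move=> G H [f [fb _]]; rewrite /empty_class (bij_eq_card fb). Qed.

Lemma upper_gen (C : graph -> Prop) b0 (hC : forall G, C G -> forall S : {set vert G}, bs S <= b0)
  d G : ed_le C d G -> beta G <= gf b0 d.
Proof. by move=> e; rewrite betaE; apply: ub e _. Qed.

Lemma lower_gen (G : graph) (Z : {set vert G}) : minset (tr [set: vert G]) Z -> #|Z| <= beta G.
Proof. by move=> m; rewrite betaE; apply: bs_ge. Qed.

Theorem theorem4 :
  (forall (C : graph -> Prop) (bC : nat),
    iso_closed C -> hereditary C -> robust C ->
    is_max_beta C bC ->
    forall d : nat, 1 <= d ->
      (bC = 1 -> is_max_beta (ed_le C d) (2 ^ d.-1 + 1)) /\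
      (2 <= bC -> is_max_beta (ed_le C d) ((bC - 1) * 2 ^ d + 1))) /\
  (forall d : nat, 1 <= d ->
     is_max_beta (ed_le empty_class d) (if d == 1 then 1 else 2 ^ (d - 2) + 1)).
Proof.
split.
- move=> C bC hiso hher _ [[G0 [CG0 bG0]] hmax] d d1.
  have hC : forall G, C G -> forall S : {set vert G}, bs S <= bC.
    by move=> G CG S; rewrite -beta_ind; apply: hmax; apply: hher.
  have up : forall G, ed_le C d G -> beta G <= gf bC d.
    by move=> G e; apply: upper_gen hC _ _ e.
  split.
  + move=> e1; move: bG0 hC up; rewrite e1 => bG0 hC up.
    have bpos : 0 < bs [set: vert G0] by rewrite -betaE bG0.
    case: (bs_attained bpos) => Y mY cY.
    have : 0 < #|Y| by rewrite cY.
    case/card_gt0P => x0 _.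
    have CK : C (induced [set x0]) := hher G0 [set x0] CG0.
    have K2e : ed_le C 1 K2.
      apply: (@ed_del C 0 K2 true K2_conn); apply: ed_in.
      apply: (hiso (induced [set x0]) (delv (true : vert K2)) _ CK); apply: iso_one.
        by rewrite card_induced cards1.
      by rewrite card_delv card_bool.
    case: K2_min => mK cK.
    have pK : 0 < #|[set: vert K2]| by rewrite cK.
    case: (dbl_iter hiso d.-1 K2_conn K2e mK pK) => G [cG eG [Z' [mZ' cZ']]].
    have dd : d.-1 + 1 = d by move: d1; clear; lia.
    rewrite dd in eG; rewrite cK /= mul1n in cZ'.
    have gd : gf 1 d = 2 ^ d.-1 + 1.
      by case: d d1 {up eG dd cZ'} => [//|d] _; rewrite gf1S.
    split.
      exists G; split => //; apply/eqP; rewrite eqn_leq -{1}gd (up G eG) /=.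
      by rewrite -cZ'; apply: lower_gen.
    by move=> G' e; rewrite -gd; apply: up.
  + move=> b2.
    have bpos : 0 < bs [set: vert G0] by rewrite -betaE bG0; apply: leq_trans b2.
    case: (bs_attained bpos) => Y mY cY.
    have : 0 < #|Y| by rewrite cY.
    case/card_gt0P => y yY.
    case: (comp_witness mY yY) => Z [mZ cZ].
    have CF : C (component y) := hher G0 _ CG0.
    have pZ : 0 < #|Z| by rewrite cZ cY.
    case: (dbl_iter hiso d (comp_connected y) (ed_in 0 CF) mZ pZ) => G [cG eG [Z' [mZ' cZ']]].
    rewrite addn0 in eG; rewrite cZ cY -betaE bG0 in cZ'.
    have gd : gf bC d = (bC - 1) * 2 ^ d + 1 by apply: gfE2.
    split.
      exists G; split => //; apply/eqP; rewrite eqn_leq -{1}gd (up G eG) /=.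
      by rewrite subn1 -cZ'; apply: lower_gen.
    by move=> G' e; rewrite -gd; apply: up.
- move=> d d1.
  have hC0 : forall G, empty_class G -> forall S : {set vert G}, bs S <= 0.
    move=> G e S; apply: bs_le => Y _; rewrite -e; exact: max_card.
  have up : forall G, ed_le empty_class d G -> beta G <= gf 0 d.
    by move=> G e; apply: upper_gen hC0 _ _ e.
  case: d d1 up => [//|[|d]] _ up.
  + have c1 : #|vert K1| = 1 by rewrite card_unit.
    case: (one_beta c1) => Z [mZ cZ].
    split.
      exists K1; split; first exact: one_vertex_ed.
      apply/eqP; rewrite eqn_leq (up K1 (one_vertex_ed c1)) /=.
      by rewrite -cZ; apply: lower_gen.
    by move=> G e; apply: up.
  + have K2e : ed_le empty_class 2 K2.
      apply: (@ed_del empty_class 1 K2 true K2_conn); apply: one_vertex_ed.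
      by rewrite card_delv card_bool.
    case: K2_min => mK cK.
    have pK : 0 < #|[set: vert K2]| by rewrite cK.
    case: (dbl_iter empty_iso d K2_conn K2e mK pK) => G [cG eG [Z' [mZ' cZ']]].
    rewrite addn2 in eG; rewrite cK /= mul1n in cZ'.
    have e2 : d.+2 - 2 = d by clear; lia.
    rewrite /= e2.
    split.
      exists G; split => //; apply/eqP; rewrite eqn_leq -{1}(gf0SS d) (up G eG) /=.
      by rewrite -cZ'; apply: lower_gen.
    by move=> G' e; rewrite -(gf0SS d); apply: up.
Qed.
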